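(* Let $a_1,\dots,a_N\ge0$, let $b_1,\dots,b_N>0$ be pairwise distinct, $a=\sum_ja_j$, and $K(t)=\sum_{j=1}^Na_jK_j(t)$ with $K_j(t)=\sum_{i=1}^jb_i\psi_i^je^{-b_it}$, $\psi_i^j=\prod_{k=1,k\neq i}^j\frac{b_k}{b_k-b_i}$. Let $u$ solve $\dot u(t)=-au(t)+\int_0^tK(t-s)u(s)\,ds$, $u(0)=u_0$. Then $u(t)\to u_0/Z$ as $t\to\infty$, where $Z=1+\sum_{i=1}^N\frac1{b_i}\sum_{j=i}^Na_j$. *)

(* Defs.v *)
From Stdlib Require Import Reals Lra.
Open Scope R_scope.

(* sumR f n = f 1 + ... + f n  (1-based, n terms) *)
Fixpoint sumR (f : nat -> R) (n : nat) : R :=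
  match n with O => 0 | S m => sumR f m + f (S m) end.

Fixpoint prodR (f : nat -> R) (n : nat) : R :=
  match n with O => 1 | S m => prodR f m * f (S m) end.

Definition psi (b : nat -> R) (i j : nat) : R :=
  prodR (fun k => if Nat.eqb k i then 1 else b k / (b k - b i)) j.

Definition Kj (b : nat -> R) (j : nat) (t : R) : R :=
  sumR (fun i => b i * psi b i j * exp (- b i * t)) j.

Definition Kker (N : nat) (a b : nat -> R) (t : R) : R :=
  sumR (fun j => a j * Kj b j t) N.

Definition Zconst (N : nat) (a b : nat -> R) : R :=
  1 + sumR (fun i => / b i * sumR (fun j => if Nat.leb i j then a j else 0) N) N.

(* Main.v *)
Require Import Defs.
From Stdlib Require Import Reals.
From Stdlib Require Import Lra Lia.
From Coquelicot Require Import Coquelicot.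
Open Scope R_scope.

Lemma sumR_ext n f g : (forall k, (1 <= k <= n)%nat -> f k = g k) -> sumR f n = sumR g n.
Proof.
  induction n; simpl; intros H; auto.
  rewrite IHn; [rewrite H; auto; lia|]. intros; apply H; lia.
Qed.

Lemma prodR_ext n f g : (forall k, (1 <= k <= n)%nat -> f k = g k) -> prodR f n = prodR g n.
Proof.
  induction n; simpl; intros H; auto.
  rewrite IHn; [rewrite H; auto; lia|]. intros; apply H; lia.
Qed.

Lemma sumR_plus n f g : sumR (fun k => f k + g k) n = sumR f n + sumR g n.
Proof. induction n; simpl; [lra|]. rewrite IHn; lra. Qed.

Lemma sumR_minus n f g : sumR (fun k => f k - g k) n = sumR f n - sumR g n.
Proof. induction n; simpl; [lra|]. rewrite IHn; lra. Qed.

Lemma sumR_scal n c f : sumR (fun k => c * f k) n = c * sumR f n.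
Proof. induction n; simpl; [lra|]. rewrite IHn; lra. Qed.

Lemma sumR_zero n : sumR (fun _ => 0) n = 0.
Proof. induction n; simpl; [lra|]. rewrite IHn; lra. Qed.

Lemma sumR_le n f g : (forall k, (1 <= k <= n)%nat -> f k <= g k) -> sumR f n <= sumR g n.
Proof.
  induction n; simpl; intros H; [lra|].
  assert (sumR f n <= sumR g n) by (apply IHn; intros; apply H; lia).
  assert (f (S n) <= g (S n)) by (apply H; lia). lra.
Qed.

Lemma sumR_nonneg n f : (forall k, (1 <= k <= n)%nat -> 0 <= f k) -> 0 <= sumR f n.
Proof.
  intros H. rewrite <- (sumR_zero n). apply sumR_le. auto.
Qed.

Lemma sumR_exchange n m F :
  sumR (fun k => sumR (fun j => F k j) m) n = sumR (fun j => sumR (fun k => F k j) n) m.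
Proof.
  induction n; simpl.
  - rewrite sumR_zero; auto.
  - rewrite IHn. rewrite <- sumR_plus. auto.
Qed.

Lemma sumR_ind_le n j f : (j <= n)%nat ->
  sumR (fun k => if Nat.leb k j then f k else 0) n = sumR f j.
Proof.
  induction n; intros H.
  - assert (j = 0%nat) by lia. subst. auto.
  - destruct (Nat.eq_dec j (S n)).
    + subst. simpl. rewrite Nat.leb_refl.
      f_equal. rewrite (sumR_ext n _ f); auto.
      intros k Hk. destruct (Nat.leb k (S n)) eqn:E; auto. apply Nat.leb_gt in E; lia.
    + cbn [sumR]. rewrite IHn by lia.
      destruct (Nat.leb (S n) j) eqn:E. apply Nat.leb_le in E; lia. lra.
Qed.

Lemma sumR_telescope j (y : nat -> R) :
  sumR (fun k => y (k - 1)%nat - y k) j = y 0%nat - y j.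
Proof.
  induction j; simpl; [lra|]. rewrite IHj. rewrite Nat.sub_0_r. lra.
Qed.

Definition cc (N : nat) (a : nat -> R) (k : nat) : R :=
  sumR (fun j => if Nat.leb k j then a j else 0) N.

Lemma SBP N a (y : nat -> R) :
  sumR (fun k => cc N a k * (y (k - 1)%nat - y k)) N = sumR (fun j => a j * (y 0%nat - y j)) N.
Proof.
  unfold cc.
  transitivity (sumR (fun k => sumR (fun j => (if Nat.leb k j then a j else 0) * (y (k-1)%nat - y k)) N) N).
  { apply sumR_ext; intros. rewrite Rmult_comm, <- sumR_scal. apply sumR_ext; intros; lra. }
  rewrite sumR_exchange. apply sumR_ext; intros j Hj.
  transitivity (a j * sumR (fun k => if Nat.leb k j then (y (k-1)%nat - y k) else 0) N).
  { rewrite <- sumR_scal. apply sumR_ext; intros. destruct (Nat.leb k j); lra. }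
  rewrite sumR_ind_le by lia. rewrite sumR_telescope. auto.
Qed.

Lemma cc_nonneg N a k : (forall j, (1 <= j <= N)%nat -> 0 <= a j) -> 0 <= cc N a k.
Proof.
  intros H. apply sumR_nonneg. intros j Hj. destruct (Nat.leb k j); auto; lra.
Qed.

Lemma cc_mono N a m k : (forall j, (1 <= j <= N)%nat -> 0 <= a j) -> (m <= k)%nat -> cc N a k <= cc N a m.
Proof.
  intros H Hmk. apply sumR_le. intros j Hj.
  destruct (Nat.leb k j) eqn:E1; destruct (Nat.leb m j) eqn:E2; try lra.
  - apply Nat.leb_le in E1; apply Nat.leb_gt in E2; lia.
  - apply H; auto.
Qed.

Lemma psi_succ b i k : (i <= k)%nat -> psi b i (S k) = psi b i k * (b (S k) / (b (S k) - b i)).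
Proof.
  intros H. unfold psi. cbn [prodR]. destruct (Nat.eqb (S k) i) eqn:E; auto.
  apply Nat.eqb_eq in E; lia.
Qed.

Lemma psi_self b k : psi b (S k) (S k) = prodR (fun m => b m / (b m + - b (S k))) k.
Proof.
  unfold psi. cbn [prodR]. rewrite Nat.eqb_refl, Rmult_1_r.
  apply prodR_ext. intros m Hm. destruct (Nat.eqb m (S k)) eqn:E.
  apply Nat.eqb_eq in E; lia. f_equal; lra.
Qed.

Definition distinct (b : nat -> R) (n : nat) :=
  forall i k, (1 <= i <= n)%nat -> (1 <= k <= n)%nat -> i <> k -> b i <> b k.

Lemma Aident b : forall k, (1 <= k)%nat -> distinct b k -> forall z,
  (forall m, (1 <= m <= k)%nat -> b m + z <> 0) ->
  sumR (fun i => psi b i k * b i / (b i + z)) k = prodR (fun m => b m / (b m + z)) k.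
Proof.
  induction k as [|k IH]; intros Hk Hd z Hz; [lia|].
  destruct (Nat.eq_dec k 0) as [->|Hk0].
  - simpl. unfold psi; simpl. field. specialize (Hz 1%nat). apply Hz; lia.
  - assert (Hd' : distinct b k) by (intros i j Hi Hj; apply Hd; lia).
    set (B := b (S k)).
    assert (HBz : B + z <> 0) by (apply Hz; lia).
    cbn [sumR prodR].
    rewrite psi_self.
    assert (E : sumR (fun i => psi b i (S k) * b i / (b i + z)) k =
      sumR (fun i => B / (B + z) * (psi b i k * b i / (b i + z) - psi b i k * b i / (b i + - B))) k).
    { apply sumR_ext. intros i Hi. rewrite psi_succ by lia. fold B.
      assert (b i + z <> 0) by (apply Hz; lia).
      assert (B - b i <> 0). { intro. apply (Hd (S k) i); try lia. unfold B in *; lra. }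
      field. repeat split; auto. intro; apply H0; lra. }
    rewrite E; clear E.
    rewrite sumR_scal, sumR_minus.
    rewrite IH; [| lia | auto | intros m Hm; apply Hz; lia].
    rewrite IH; try lia; auto.
    2:{ intros m Hm. intro. apply (Hd m (S k)); try lia. unfold B in *; lra. }
    fold B. field. auto.
Qed.

Lemma Sident b k : (1 <= k)%nat -> distinct b (S k) ->
  sumR (fun i => b i * psi b i (S k)) (S k) = 0.
Proof.
  intros Hk Hd. set (B := b (S k)). cbn [sumR]. rewrite psi_self.
  assert (Hd' : distinct b k) by (intros i j Hi Hj; apply Hd; lia).
  rewrite (sumR_ext k _ (fun i => - B * (psi b i k * b i / (b i + - B)))).
  2:{ intros i Hi. rewrite psi_succ by lia. fold B.
      assert (B - b i <> 0). { intro. apply (Hd (S k) i); try lia. unfold B in *; lra. }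
      field. split; auto. intro; apply H; lra. }
  rewrite sumR_scal. rewrite Aident; auto.
  - fold B. lra.
  - intros m Hm. intro. apply (Hd m (S k)); try lia. unfold B in *; lra.
Qed.

Lemma psi11 b : psi b 1 1 = 1.
Proof. unfold psi; simpl; lra. Qed.

Definition ut (u : R -> R) (u0 : R) (s : R) : R := if Rle_dec 0 s then u s else u0.

Lemma ut_cont (u : R -> R) (u0 : R)
  (Hu0 : u 0 = u0)
  (Hcont0 : forall eps, 0 < eps -> exists delta, 0 < delta /\
              forall t, 0 <= t < delta -> Rabs (u t - u0) < eps)
  (Hder : forall t, 0 < t -> exists l, derivable_pt_lim u t l) :
  forall s, continuity_pt (ut u u0) s.
Proof.
  intros s. unfold continuity_pt, continue_in, limit1_in, limit_in. simpl. unfold R_dist.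
  intros eps Heps.
  destruct (Rlt_dec s 0) as [Hs|Hs].
  - exists (- s). split; [lra|]. intros x [_ Hx].
    unfold ut. destruct (Rle_dec 0 x); [|destruct (Rle_dec 0 s)].
    + apply Rabs_def2 in Hx. lra.
    + lra.
    + rewrite Rminus_diag, Rabs_R0; lra.
  - destruct (Req_dec s 0) as [->|Hs0].
    + destruct (Hcont0 eps Heps) as [d [Hd Hd']]. exists d. split; auto.
      intros x [_ Hx]. rewrite Rminus_0_r in Hx. unfold ut.
      destruct (Rle_dec 0 0); [|lra]. rewrite Hu0.
      destruct (Rle_dec 0 x).
      * apply Hd'. split; auto. apply Rabs_def2 in Hx. lra.
      * rewrite Rminus_diag, Rabs_R0; lra.
    + assert (Hs' : 0 < s) by lra.
      destruct (Hder s Hs') as [l Hl].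
      assert (Hc : continuity_pt u s) by (apply derivable_continuous_pt; exists l; exact Hl).
      unfold continuity_pt, continue_in, limit1_in, limit_in in Hc. simpl in Hc. unfold R_dist in Hc.
      destruct (Hc eps Heps) as [d [Hd Hd']].
      exists (Rmin d s). split; [apply Rmin_pos; lra|].
      intros x [Hdx Hx]. unfold ut.
      assert (Hx1 := Rmin_l d s). assert (Hx2 := Rmin_r d s).
      apply Rabs_def2 in Hx as Hx'.
      destruct (Rle_dec 0 x); [|lra]. destruct (Rle_dec 0 s); [|lra].
      apply Hd'. split. exact Hdx. apply Rlt_le_trans with (Rmin d s); auto.
Qed.

Lemma cont_conv f x : continuity_pt f x -> continuous f x.
Proof. intros H. apply continuity_pt_filterlim. exact H. Qed.

Lemma cont_expf (b f : R -> R) c : (forall s, continuity_pt f s) ->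
  forall s, continuity_pt (fun s => exp (c * s) * f s) s.
Proof.
  intros Hf s. apply continuity_pt_mult; auto.
  apply (continuity_pt_comp (fun s => c * s) exp).
  - apply continuity_pt_mult. apply continuity_pt_const; intros ??; auto. apply continuity_pt_id.
  - apply derivable_continuous_pt. apply derivable_pt_exp.
Qed.

Definition G (b : nat -> R) (f : R -> R) (i : nat) (t : R) : R :=
  RInt (fun s => exp (b i * s) * f s) 0 t.
Definition J (b : nat -> R) (f : R -> R) (i : nat) (t : R) : R :=
  exp (- b i * t) * G b f i t.

Lemma exRInt_cont (g : R -> R) x y : (forall s, continuity_pt g s) -> ex_RInt g x y.
Proof. intros H. apply (@ex_RInt_continuous R_CompleteNormedModule). intros z _. apply cont_conv. auto. Qed.

Lemma G_der b f i t : (forall s, continuity_pt f s) ->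
  derivable_pt_lim (G b f i) t (exp (b i * t) * f t).
Proof.
  intros Hf. apply is_derive_Reals. unfold G.
  apply (@is_derive_RInt R_NormedModule (fun s => exp (b i * s) * f s) (fun t => RInt (fun s => exp (b i * s) * f s) 0 t) 0 t).
  - apply filter_forall. intros y. apply (@RInt_correct R_CompleteNormedModule). apply exRInt_cont.
    apply cont_expf; auto.
  - apply cont_conv. apply cont_expf; auto.
Qed.

Lemma J_der b f i t : (forall s, continuity_pt f s) ->
  derivable_pt_lim (J b f i) t (f t - b i * J b f i t).
Proof.
  intros Hf. unfold J.
  assert (H1 : derivable_pt_lim (fun t => exp (- b i * t)) t (exp (- b i * t) * (- b i))).
  { apply is_derive_Reals. auto_derive; auto. lra. }
  assert (H := derivable_pt_lim_mult _ _ t _ _ H1 (G_der b f i t Hf)).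
  replace (f t - b i * (exp (- b i * t) * G b f i t)) with
    (exp (- b i * t) * - b i * G b f i t + exp (- b i * t) * (exp (b i * t) * f t)).
  - exact H.
  - rewrite <- Rmult_assoc, <- exp_plus. replace (- b i * t + b i * t) with 0 by ring.
    rewrite exp_0. ring.
Qed.

Lemma dsum n (F : nat -> R -> R) F' t :
  (forall k, (1 <= k <= n)%nat -> derivable_pt_lim (F k) t (F' k)) ->
  derivable_pt_lim (fun t => sumR (fun k => F k t) n) t (sumR F' n).
Proof.
  induction n; intros H; simpl.
  - apply derivable_pt_lim_const.
  - apply (derivable_pt_lim_plus (fun t => sumR (fun k => F k t) n) (F (S n))).
    + apply IHn. intros; apply H; lia.
    + apply H; lia.
Qed.

Lemma dscal c f t l : derivable_pt_lim f t l -> derivable_pt_lim (fun t => c * f t) t (c * l).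
Proof. intros H. apply (derivable_pt_lim_scal f c t l H). Qed.

Lemma sumR_S f n : sumR f (S n) = sumR f n + f (S n).
Proof. reflexivity. Qed.

Definition I (b : nat -> R) (f : R -> R) (k : nat) (t : R) : R :=
  sumR (fun i => b i * psi b i k * J b f i t) k.

Definition X (b : nat -> R) (f : R -> R) (k : nat) (t : R) : R :=
  match k with O => f t | _ => I b f k t end.

Lemma I_der b f k t : (forall s, continuity_pt f s) -> distinct b (S k) ->
  derivable_pt_lim (X b f (S k)) t (b (S k) * (X b f k t - X b f (S k) t)).
Proof.
  intros Hf Hd. cbn [X].
  assert (H : derivable_pt_lim (I b f (S k)) t
     (sumR (fun i => b i * psi b i (S k) * (f t - b i * J b f i t)) (S k))).
  { unfold I. apply dsum. intros i _. apply dscal. apply J_der; auto. }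
  match goal with |- derivable_pt_lim _ _ ?l => replace l with (sumR (fun i => b i * psi b i (S k) * (f t - b i * J b f i t)) (S k)); [exact H|] end. symmetry.
  destruct k as [|k].
  - unfold I, X; simpl. rewrite psi11. ring.
  - assert (E1 : sumR (fun i => b i * psi b i (S (S k)) * (f t - b i * J b f i t)) (S (S k)) =
       sumR (fun i => b i * psi b i (S (S k))) (S (S k)) * f t
       - sumR (fun i => b i * b i * psi b i (S (S k)) * J b f i t) (S (S k))).
    { rewrite <- (Rmult_comm (f t)), <- sumR_scal, <- sumR_minus. apply sumR_ext; intros; ring. }
    rewrite E1, Sident; auto; try lia.
    unfold X, I. set (B := b (S (S k))).
    rewrite (sumR_S (fun i => b i * psi b i (S (S k)) * J b f i t)).
    rewrite (sumR_S (fun i => b i * b i * psi b i (S (S k)) * J b f i t)).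
    fold B.
    assert (E4 : forall i, (1 <= i <= S k)%nat ->
      b i * b i * psi b i (S (S k)) * J b f i t =
      - B * (b i * psi b i (S k) * J b f i t) + B * (b i * psi b i (S (S k)) * J b f i t)).
    { intros i Hi. assert (B - b i <> 0). { intro. apply (Hd (S (S k)) i); try lia. unfold B in *; lra. }
      rewrite psi_succ by lia. fold B. field. auto. }
    rewrite (sumR_ext _ _ _ E4), sumR_plus, !sumR_scal. ring.
Qed.

Lemma csum n (F : nat -> R -> R) t :
  (forall k, (1 <= k <= n)%nat -> continuity_pt (F k) t) ->
  continuity_pt (fun t => sumR (fun k => F k t) n) t.
Proof.
  induction n; intros H; simpl.
  - apply continuity_pt_const. intros ??; auto.
  - apply (continuity_pt_plus (fun t => sumR (fun k => F k t) n) (F (S n))).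
    + apply IHn; intros; apply H; lia.
    + apply H; lia.
Qed.

Lemma dsum' n (F : nat -> R -> R) F' t :
  (forall k, (1 <= k <= n)%nat -> derivable_pt_lim (F k) t (F' k)) ->
  derivable_pt_lim (fun t => sumR (fun k => F k t) n) t (sumR F' n).
Proof.
  induction n; intros H; simpl.
  - apply derivable_pt_lim_const.
  - apply (derivable_pt_lim_plus (fun t => sumR (fun k => F k t) n) (F (S n))).
    + apply IHn. intros; apply H; lia.
    + apply H; lia.
Qed.

Lemma dsq f t l L : derivable_pt_lim f t l ->
  derivable_pt_lim (fun t => (f t - L) * (f t - L)) t (2 * (f t - L) * l).
Proof.
  intros H.
  assert (H1 : derivable_pt_lim (fun t => f t - L) t (l - 0)).
  { apply (derivable_pt_lim_minus f (fun _ => L)); auto. apply derivable_pt_lim_const. }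
  assert (H2 := derivable_pt_lim_mult _ _ t _ _ H1 H1). simpl in H2.
  replace (2 * (f t - L) * l) with ((l - 0) * (f t - L) + (f t - L) * (l - 0)) by ring.
  exact H2.
Qed.

Lemma dscal' c f t l : derivable_pt_lim f t l -> derivable_pt_lim (fun t => c * f t) t (c * l).
Proof. intros H. apply (derivable_pt_lim_scal f c t l H). Qed.

Lemma CS k (d : nat -> R) : (sumR d k) * (sumR d k) <= INR k * sumR (fun m => d m * d m) k.
Proof.
  induction k; cbn [sumR]; [simpl; lra|].
  set (S0 := sumR d k) in *. set (Q := sumR (fun m => d m * d m) k) in *.
  rewrite S_INR.
  destruct (Nat.eq_dec k 0) as [->|Hk].
  - simpl in *. subst S0 Q. simpl. nra.
  - assert (Hk' : 0 < INR k) by (apply lt_0_INR; lia).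
    assert (HH : 0 <= (S0 - INR k * d (S k)) * (S0 - INR k * d (S k))) by apply Rle_0_sqr.
    assert (2 * S0 * d (S k) <= Q + INR k * d (S k) * d (S k)).
    { apply Rmult_le_reg_l with (INR k); auto. nra. }
    nra.
Qed.

Lemma sumR_mono_n f k n : (k <= n)%nat -> (forall m, (1 <= m <= n)%nat -> 0 <= f m) ->
  sumR f k <= sumR f n.
Proof.
  revert k. induction n; intros k Hkn H.
  - assert (k = 0%nat) by lia. subst. lra.
  - destruct (Nat.eq_dec k (S n)) as [->|Hne]; [lra|].
    simpl. assert (0 <= f (S n)) by (apply H; lia).
    assert (sumR f k <= sumR f n) by (apply IHn; [lia| intros; apply H; lia]). lra.
Qed.

Definition pi N a (b : nat -> R) k := / b k * cc N a k.
Definition Pf N a b (x : nat -> R -> R) t := x 0%nat t + sumR (fun k => pi N a b k * x k t) N.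
Definition Vf N a b (x : nat -> R -> R) L t :=
  (x 0%nat t - L) * (x 0%nat t - L) + sumR (fun k => pi N a b k * ((x k t - L) * (x k t - L))) N.
Definition Df N a (x : nat -> R -> R) t :=
  sumR (fun j => a j * ((x j t - x 0%nat t) * (x j t - x 0%nat t))) N +
  sumR (fun k => cc N a k * ((x (k-1)%nat t - x k t) * (x (k-1)%nat t - x k t))) N.

Definition Hyps N a b (x : nat -> R -> R) u0 :=
  (forall j, (1 <= j <= N)%nat -> 0 <= a j) /\
  (forall i, (1 <= i <= N)%nat -> 0 < b i) /\
  x 0%nat 0 = u0 /\ (forall k, (1 <= k <= N)%nat -> x k 0 = 0) /\
  (forall k, (k <= N)%nat -> continuity_pt (x k) 0) /\
  (forall t, 0 < t -> derivable_pt_lim (x 0%nat) t (sumR (fun j => a j * (x j t - x 0%nat t)) N)) /\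
  (forall t, 0 < t -> forall k, (1 <= k <= N)%nat ->
      derivable_pt_lim (x k) t (b k * (x (k-1)%nat t - x k t))).

Lemma P_der N a b x u0 t : Hyps N a b x u0 -> 0 < t -> derivable_pt_lim (Pf N a b x) t 0.
Proof.
  intros (Ha & Hb & H0 & Hk0 & Hc & Hd0 & Hdk) Ht. unfold Pf.
  assert (H := derivable_pt_lim_plus _ _ t _ _ (Hd0 t Ht)
     (dsum' N (fun k t => pi N a b k * x k t) (fun k => pi N a b k * (b k * (x (k-1)%nat t - x k t))) t
        (fun k Hk => dscal' _ _ _ _ (Hdk t Ht k Hk)))).
  match goal with |- derivable_pt_lim _ _ ?l => replace l with
    (sumR (fun j => a j * (x j t - x 0%nat t)) N +
       sumR (fun k => pi N a b k * (b k * (x (k-1)%nat t - x k t))) N) end.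
  - exact H.
  - assert (E : sumR (fun k => pi N a b k * (b k * (x (k-1)%nat t - x k t))) N =
                 sumR (fun j => a j * (x 0%nat t - x j t)) N).
    { rewrite <- (SBP N a (fun k => x k t)). apply sumR_ext. intros k Hk. cbv beta.
      unfold pi. assert (0 < b k) by auto. field. lra. }
    rewrite E. rewrite <- sumR_plus. rewrite <- (sumR_zero N). apply sumR_ext; intros; ring.
Qed.

Lemma Df_nonneg N a b x u0 t : Hyps N a b x u0 -> 0 <= Df N a x t.
Proof.
  intros (Ha & _). unfold Df. apply Rplus_le_le_0_compat; apply sumR_nonneg; intros k Hk.
  - apply Rmult_le_pos; auto. apply Rle_0_sqr.
  - apply Rmult_le_pos. apply cc_nonneg; auto. apply Rle_0_sqr.
Qed.

Lemma V_der N a b x u0 L t : Hyps N a b x u0 -> 0 < t ->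
  derivable_pt_lim (Vf N a b x L) t (- Df N a x t).
Proof.
  intros Hy Ht. assert (Hy' := Hy). destruct Hy' as (Ha & Hb & H0 & Hk0 & Hc & Hd0 & Hdk). unfold Vf.
  assert (H := derivable_pt_lim_plus _ _ t _ _ (dsq _ _ _ L (Hd0 t Ht))
     (dsum' N (fun k t => pi N a b k * ((x k t - L) * (x k t - L)))
        (fun k => pi N a b k * (2 * (x k t - L) * (b k * (x (k-1)%nat t - x k t)))) t
        (fun k Hk => dscal' _ _ _ _ (dsq _ _ _ L (Hdk t Ht k Hk))))).
  match goal with |- derivable_pt_lim _ _ ?l => replace l with
    (2 * (x 0%nat t - L) * sumR (fun j => a j * (x j t - x 0%nat t)) N +
       sumR (fun k => pi N a b k * (2 * (x k t - L) * (b k * (x (k-1)%nat t - x k t)))) N) end.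
  - exact H.
  - set (y := fun k => (x k t - L) * (x k t - L)).
    assert (E1 : sumR (fun k => pi N a b k * (2 * (x k t - L) * (b k * (x (k-1)%nat t - x k t)))) N =
       sumR (fun k => cc N a k * (y (k-1)%nat - y k)) N -
       sumR (fun k => cc N a k * ((x (k-1)%nat t - x k t) * (x (k-1)%nat t - x k t))) N).
    { rewrite <- sumR_minus. apply sumR_ext. intros k Hk. unfold pi, y. assert (0 < b k) by auto. field. lra. }
    assert (E3 : 2 * (x 0%nat t - L) * sumR (fun j => a j * (x j t - x 0%nat t)) N =
       sumR (fun j => a j * (y j - y 0%nat)) N -
       sumR (fun j => a j * ((x j t - x 0%nat t) * (x j t - x 0%nat t))) N).
    { rewrite <- sumR_scal, <- sumR_minus. apply sumR_ext. intros k Hk. unfold y. ring. }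
    assert (E4 : sumR (fun j => a j * (y j - y 0%nat)) N + sumR (fun j => a j * (y 0%nat - y j)) N = 0).
    { rewrite <- sumR_plus. rewrite <- (sumR_zero N). apply sumR_ext; intros; ring. }
    rewrite E1, E3, SBP. unfold Df. lra.
Qed.

Lemma const_on N a b x u0 (f : R -> R) s t : Hyps N a b x u0 -> 0 < s <= t ->
  (forall c, 0 < c -> derivable_pt_lim f c 0) -> f t = f s.
Proof.
  intros _ [Hs Hst] Hd. destruct (Req_dec s t) as [->|Hne]; auto.
  destruct (MVT_cor2 f (fun _ => 0) s t) as [c [Hc _]]; [lra| |].
  - intros c Hc. apply Hd. lra.
  - lra.
Qed.

Lemma P_const N a b x u0 t : Hyps N a b x u0 -> 0 < t -> Pf N a b x t = u0.
Proof.
  intros Hy Ht. assert (Hy' := Hy). destruct Hy' as (Ha & Hb & H0 & Hk0 & Hc & Hd0 & Hdk).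
  assert (HP0 : Pf N a b x 0 = u0).
  { unfold Pf. rewrite H0. rewrite (sumR_ext N _ (fun _ => 0)). rewrite sumR_zero; ring.
    intros k Hk. rewrite Hk0; auto; ring. }
  assert (HPc : continuity_pt (Pf N a b x) 0).
  { unfold Pf. apply (continuity_pt_plus (x 0%nat) (fun t => sumR (fun k => pi N a b k * x k t) N)).
    apply Hc; lia. apply csum. intros k Hk. apply (continuity_pt_scal (x k) (pi N a b k)). apply Hc; lia. }
  destruct (Req_dec (Pf N a b x t) u0) as [E|Hne]; auto. exfalso.
  set (e := Rabs (Pf N a b x t - u0)).
  assert (He : 0 < e) by (apply Rabs_pos_lt; lra).
  unfold continuity_pt, continue_in, limit1_in, limit_in in HPc. simpl in HPc. unfold R_dist in HPc.
  destruct (HPc e He) as [alp [Halp Hal]].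
  set (s := Rmin (alp / 2) (t / 2)).
  assert (Hs1 : s <= alp / 2) by apply Rmin_l. assert (Hs2 : s <= t / 2) by apply Rmin_r.
  assert (Hs0 : 0 < s) by (apply Rmin_pos; lra).
  assert (Hts : Pf N a b x t = Pf N a b x s).
  { apply (const_on N a b x u0); auto. lra. intros c Hc0. apply (P_der N a b x u0); auto. }
  assert (Hl : Rabs (Pf N a b x s - Pf N a b x 0) < e).
  { apply Hal. split. split. constructor. lra. rewrite Rminus_0_r, Rabs_pos_eq; lra. }
  rewrite HP0, <- Hts in Hl. unfold e in Hl. lra.
Qed.

Definition Zc N a b := 1 + sumR (pi N a b) N.
Definition Cst N (b : nat -> R) := INR N * sumR (fun k => / b k) N + 1.

Lemma Zc_ge1 N a b : (forall j, (1 <= j <= N)%nat -> 0 <= a j) -> (forall i, (1 <= i <= N)%nat -> 0 < b i) -> 1 <= Zc N a b.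
Proof.
  intros Ha Hb. unfold Zc. assert (0 <= sumR (pi N a b) N); [|lra].
  apply sumR_nonneg. intros k Hk. unfold pi. apply Rmult_le_pos.
  left; apply Rinv_0_lt_compat; auto. apply cc_nonneg; auto.
Qed.

Lemma Cst_pos N b : (forall i, (1 <= i <= N)%nat -> 0 < b i) -> 0 < Cst N b.
Proof.
  intros Hb. unfold Cst. assert (0 <= INR N * sumR (fun k => / b k) N); [|lra].
  apply Rmult_le_pos. apply pos_INR. apply sumR_nonneg. intros; left; apply Rinv_0_lt_compat; auto.
Qed.

Lemma W_bound N a b x u0 t : Hyps N a b x u0 ->
  sumR (fun k => pi N a b k * ((x k t - x 0%nat t) * (x k t - x 0%nat t))) N <=
  INR N * sumR (fun k => / b k) N *
  sumR (fun k => cc N a k * ((x (k-1)%nat t - x k t) * (x (k-1)%nat t - x k t))) N.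
Proof.
  intros (Ha & Hb & _). set (d := fun m => x (m-1)%nat t - x m t).
  set (D2 := sumR (fun k => cc N a k * ((x (k-1)%nat t - x k t) * (x (k-1)%nat t - x k t))) N).
  assert (HD2 : forall k, (k <= N)%nat -> sumR (fun m => cc N a m * (d m * d m)) k <= D2).
  { intros k Hk. apply sumR_mono_n; auto. intros m Hm. apply Rmult_le_pos. apply cc_nonneg; auto. apply Rle_0_sqr. }
  assert (HD2p : 0 <= D2).
  { unfold D2. apply sumR_nonneg. intros m Hm. apply Rmult_le_pos. apply cc_nonneg; auto. apply Rle_0_sqr. }
  assert (Hpt : forall k, (1 <= k <= N)%nat ->
     pi N a b k * ((x k t - x 0%nat t) * (x k t - x 0%nat t)) <= / b k * (INR N * D2)).
  { intros k Hk. unfold pi. rewrite Rmult_assoc. apply Rmult_le_compat_l.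
    { left; apply Rinv_0_lt_compat; auto. }
    assert (Ht : x k t - x 0%nat t = - sumR d k).
    { unfold d. rewrite (sumR_telescope k (fun m => x m t)). ring. }
    rewrite Ht. replace (- sumR d k * - sumR d k) with (sumR d k * sumR d k) by ring.
    assert (Hcs := CS k d).
    assert (Hc0 : 0 <= cc N a k) by (apply cc_nonneg; auto).
    apply Rle_trans with (cc N a k * (INR k * sumR (fun m => d m * d m) k)).
    { apply Rmult_le_compat_l; auto. }
    apply Rle_trans with (INR k * sumR (fun m => cc N a m * (d m * d m)) k).
    { rewrite <- !sumR_scal. apply sumR_le. intros m Hm.
      assert (cc N a k <= cc N a m) by (apply cc_mono; auto; lia).
      assert (0 <= d m * d m) by apply Rle_0_sqr.
      assert (0 <= INR k) by apply pos_INR. assert (0 <= INR k * (d m * d m)) by (apply Rmult_le_pos; auto). nra. }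
    apply Rmult_le_compat. apply pos_INR.
    { apply sumR_nonneg. intros m Hm. apply Rmult_le_pos. apply cc_nonneg; auto. apply Rle_0_sqr. }
    apply le_INR; lia. apply HD2; lia. }
  apply Rle_trans with (sumR (fun k => / b k * (INR N * D2)) N).
  { apply sumR_le; auto. }
  rewrite (sumR_ext N _ (fun k => (INR N * D2) * / b k)) by (intros; ring).
  rewrite sumR_scal. lra.
Qed.

Lemma V_le N a b x u0 t : Hyps N a b x u0 -> 0 < t ->
  Vf N a b x (u0 / Zc N a b) t <= Cst N b * Df N a x t.
Proof.
  intros Hy Ht. assert (Hy' := Hy). destruct Hy' as (Ha & Hb & _).
  set (L := u0 / Zc N a b). set (x0 := x 0%nat t).
  assert (HZ := Zc_ge1 N a b Ha Hb).
  assert (HP := P_const N a b x u0 t Hy Ht). unfold Pf in HP. fold x0 in HP.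
  set (sp := sumR (pi N a b) N). set (sx := sumR (fun k => pi N a b k * x k t) N) in HP.
  assert (HL : L * (1 + sp) = u0). { unfold L, sp. unfold Zc. field. unfold Zc in HZ; lra. }
  assert (Hsp : 0 <= sp) by (unfold Zc in HZ; fold sp in HZ; lra).
  assert (E : sumR (fun k => pi N a b k * ((x k t - L) * (x k t - L))) N =
     sumR (fun k => pi N a b k * ((x k t - x0) * (x k t - x0))) N + (x0 - L) * (2 * sx - (x0 + L) * sp)).
  { assert (E' : (x0 - L) * (2 * sx - (x0 + L) * sp) =
       sumR (fun k => (x0 - L) * (2 * (pi N a b k * x k t) - (x0 + L) * pi N a b k)) N).
    { rewrite sumR_scal, sumR_minus, sumR_scal, sumR_scal. reflexivity. }
    rewrite E', <- sumR_plus. apply sumR_ext; intros; ring. }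
  assert (HW := W_bound N a b x u0 t Hy). fold x0 in HW.
  set (W := sumR (fun k => pi N a b k * ((x k t - x0) * (x k t - x0))) N) in *.
  set (D2 := sumR (fun k => cc N a k * ((x (k-1)%nat t - x k t) * (x (k-1)%nat t - x k t))) N) in *.
  set (C := INR N * sumR (fun k => / b k) N) in *.
  assert (HC : 0 <= C). { unfold C. apply Rmult_le_pos. apply pos_INR. apply sumR_nonneg. intros; left; apply Rinv_0_lt_compat; auto. }
  assert (HD1 : 0 <= sumR (fun j => a j * ((x j t - x0) * (x j t - x0))) N).
  { apply sumR_nonneg. intros. apply Rmult_le_pos; auto. apply Rle_0_sqr. }
  assert (HDf : 0 <= Df N a x t) by (apply (Df_nonneg N a b x u0); auto).
  unfold Vf. fold x0. rewrite E. unfold Cst. fold C.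
  unfold Df in HDf |- *. fold x0 in HDf |- *. fold D2 in HDf |- *.
  assert (Hneg : (x0 - L) * (x0 - L) + (x0 - L) * (2 * sx - (x0 + L) * sp) <= 0).
  { replace sx with (L * (1 + sp) - x0) by lra.
    replace ((x0 - L) * (x0 - L) + (x0 - L) * (2 * (L * (1 + sp) - x0) - (x0 + L) * sp))
      with (- (1 + sp) * ((x0 - L) * (x0 - L))) by ring.
    assert (0 <= (x0 - L) * (x0 - L)) by apply Rle_0_sqr. nra. }
  nra.
Qed.

Lemma V_nonneg N a b x u0 L t : Hyps N a b x u0 -> 0 <= Vf N a b x L t.
Proof.
  intros (Ha & Hb & _). unfold Vf. apply Rplus_le_le_0_compat. apply Rle_0_sqr.
  apply sumR_nonneg. intros k Hk. apply Rmult_le_pos. unfold pi. apply Rmult_le_pos.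
  left; apply Rinv_0_lt_compat; auto. apply cc_nonneg; auto. apply Rle_0_sqr.
Qed.

Lemma V_mono N a b x u0 L s t : Hyps N a b x u0 -> 0 < s <= t -> Vf N a b x L t <= Vf N a b x L s.
Proof.
  intros Hy [Hs Hst]. destruct (Req_dec s t) as [->|Hne]; [lra|].
  destruct (MVT_cor2 (Vf N a b x L) (fun c => - Df N a x c) s t) as [c [Hc Hc2]]; [lra| |].
  - intros c Hc. apply (V_der N a b x u0); auto. lra.
  - assert (0 <= Df N a x c) by (apply (Df_nonneg N a b x u0); auto). nra.
Qed.

Theorem abstract_conv N a b x u0 : Hyps N a b x u0 ->
  forall eps, 0 < eps -> exists T, 0 <= T /\ forall t, T <= t ->
    Rabs (x 0%nat t - u0 / Zc N a b) < eps.
Proof.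
  intros Hy eps Heps. assert (Hy' := Hy). destruct Hy' as (Ha & Hb & _).
  set (L := u0 / Zc N a b). set (V := Vf N a b x L).
  set (e := eps * eps). assert (He : 0 < e) by (unfold e; nra).
  assert (HC := Cst_pos N b Hb). set (C := Cst N b) in *.
  assert (HV1 : 0 <= V 1) by (apply (V_nonneg N a b x u0); auto).
  set (T := 2 + C * V 1 / e).
  assert (HT : 2 <= T). { unfold T. assert (0 <= C * V 1 / e); [|lra].
    apply Rmult_le_pos; [apply Rmult_le_pos; lra | left; apply Rinv_0_lt_compat; auto]. }
  assert (HVT : V T < e).
  { destruct (Rlt_dec (V T) e) as [H|H]; auto. exfalso. apply Rnot_lt_le in H.
    destruct (MVT_cor2 V (fun c => - Df N a x c) 1 T) as [c [Hc Hc2]]; [lra| |].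
    - intros c Hc. apply (V_der N a b x u0); auto. lra.
    - assert (HVc : V T <= V c) by (apply (V_mono N a b x u0); auto; lra).
      assert (HVD : V c <= C * Df N a x c) by (apply (V_le N a b x u0); auto; lra).
      assert (HVT0 : 0 <= V T) by (apply (V_nonneg N a b x u0); auto).
      assert (HD : e / C <= Df N a x c).
      { apply Rmult_le_reg_l with C; auto. field_simplify; [|lra]. lra. }
      assert (HT1 : e / C * (T - 1) = e / C + V 1).
      { unfold T. field. lra. }
      assert (0 < e / C) by (apply Rdiv_lt_0_compat; auto).
      assert (Df N a x c * (T - 1) >= e / C * (T - 1)) by (apply Rle_ge, Rmult_le_compat_r; lra).
      lra. }
  exists T. split; [lra|]. intros t Ht.
  assert (HVt : V t < e) by (apply Rle_lt_trans with (V T); auto; apply (V_mono N a b x u0); auto; lra).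
  assert (Hsq : (x 0%nat t - L) * (x 0%nat t - L) <= V t).
  { unfold V, Vf. assert (0 <= sumR (fun k => pi N a b k * ((x k t - L) * (x k t - L))) N); [|lra].
    apply sumR_nonneg. intros k Hk. apply Rmult_le_pos. unfold pi. apply Rmult_le_pos.
    left; apply Rinv_0_lt_compat; auto. apply cc_nonneg; auto. apply Rle_0_sqr. }
  fold L. unfold e in HVt.
  apply Rabs_def1; nra.
Qed.

Lemma RInt_scal' (g : R -> R) c x y : ex_RInt g x y -> RInt (fun s => c * g s) x y = c * RInt g x y.
Proof. intros H. exact (@RInt_scal R_CompleteNormedModule g x y c H). Qed.

Lemma RInt_sum n (F : nat -> R -> R) x y :
  (forall k, (1 <= k <= n)%nat -> forall s, continuity_pt (F k) s) ->
  RInt (fun s => sumR (fun k => F k s) n) x y = sumR (fun k => RInt (F k) x y) n.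
Proof.
  induction n; intros H; simpl.
  - exact (@RInt_const R_CompleteNormedModule x y 0 ) || (rewrite RInt_const; unfold scal; simpl; unfold mult; simpl; ring).
  - rewrite <- IHn by (intros; apply H; lia).
    exact (@RInt_plus R_CompleteNormedModule (fun s => sumR (fun k => F k s) n) (F (S n)) x y
      (exRInt_cont _ _ _ (fun s => csum n F s (fun k Hk => H k ltac:(lia) s)))
      (exRInt_cont _ _ _ (H (S n) ltac:(lia)))).
Qed.

Lemma sumR_mulr n f c : sumR f n * c = sumR (fun k => f k * c) n.
Proof. rewrite Rmult_comm, <- sumR_scal. apply sumR_ext; intros; ring. Qed.

Lemma link N a b u u0 t (pr : Riemann_integrable (fun s => Kker N a b (t - s) * u s) 0 t) :
  0 < t -> (forall s, continuity_pt (ut u u0) s) ->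
  RiemannInt pr = sumR (fun j => a j * I b (ut u u0) j t) N.
Proof.
  intros Ht Hf. set (f := ut u u0) in *.
  rewrite <- RInt_Reals.
  rewrite (RInt_ext _ (fun s => sumR (fun j => (fun j s => a j *
       sumR (fun i => (fun i s => (b i * psi b i j * exp (- b i * t)) * (exp (b i * s) * f s)) i s) j) j s) N)).
  2:{ intros s Hs. rewrite Rmin_left in Hs by lra. rewrite Rmax_right in Hs by lra.
      unfold f, ut. destruct (Rle_dec 0 s); [|lra].
      unfold Kker. rewrite sumR_mulr. apply sumR_ext. intros j Hj.
      unfold Kj. rewrite Rmult_assoc, sumR_mulr. f_equal. apply sumR_ext. intros i Hi.
      replace (- b i * (t - s)) with (- b i * t + b i * s) by ring. rewrite exp_plus. ring. }
  rewrite RInt_sum.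
  2:{ intros j Hj s. apply (continuity_pt_scal (fun s => sumR (fun i => (b i * psi b i j * exp (- b i * t)) * (exp (b i * s) * f s)) j) (a j)).
      apply (csum j (fun i s => (b i * psi b i j * exp (- b i * t)) * (exp (b i * s) * f s))).
      intros i Hi. apply (continuity_pt_scal (fun s => exp (b i * s) * f s)). apply cont_expf; auto. }
  apply sumR_ext. intros j Hj. cbv beta.
  rewrite RInt_scal'.
  2:{ apply exRInt_cont. intros s.
      apply (csum j (fun i s => (b i * psi b i j * exp (- b i * t)) * (exp (b i * s) * f s))).
      intros i Hi. apply (continuity_pt_scal (fun s => exp (b i * s) * f s)). apply cont_expf; auto. }
  f_equal. rewrite RInt_sum.
  2:{ intros i Hi s. apply (continuity_pt_scal (fun s => exp (b i * s) * f s)). apply cont_expf; auto. }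
  unfold I. apply sumR_ext. intros i Hi. rewrite RInt_scal'.
  2:{ apply exRInt_cont. apply cont_expf; auto. }
  unfold J, G. ring.
Qed.

Theorem mainTheorem5 (N : nat) (a b : nat -> R) (u0 : R) (u : R -> R)
  (Ha : forall j, (1 <= j <= N)%nat -> 0 <= a j)
  (Hb : forall i, (1 <= i <= N)%nat -> 0 < b i)
  (Hdist : forall i k, (1 <= i <= N)%nat -> (1 <= k <= N)%nat -> i <> k -> b i <> b k)
  (Hu0 : u 0 = u0)
  (Hcont0 : forall eps, 0 < eps -> exists delta, 0 < delta /\
              forall t, 0 <= t < delta -> Rabs (u t - u0) < eps)
  (Hode : forall t, 0 < t ->
     exists pr : Riemann_integrable (fun s => Kker N a b (t - s) * u s) 0 t,
       derivable_pt_lim u t (- sumR a N * u t + RiemannInt pr)) :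
  forall eps, 0 < eps -> exists T, forall t, T <= t ->
    Rabs (u t - u0 / Zconst N a b) < eps.
Proof.
  intros eps Heps.
  set (f := ut u u0).
  assert (Hf : forall s, continuity_pt f s).
  { apply ut_cont; auto. intros t Ht. destruct (Hode t Ht) as [pr H]. eexists; exact H. }
  assert (Hdk : forall k, (S k <= N)%nat -> forall t,
     derivable_pt_lim (X b f (S k)) t (b (S k) * (X b f k t - X b f (S k) t))).
  { intros k Hk t. apply I_der; auto. intros i j Hi Hj. apply Hdist; lia. }
  assert (Hy : Hyps N a b (X b f) u0).
  { unfold Hyps. split; [auto|]. split; [auto|]. split.
    { simpl. unfold f, ut. destruct (Rle_dec 0 0); [auto|lra]. }
    split.
    { intros k Hk. destruct k as [|k]; [lia|]. simpl X. unfold I.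
      transitivity (sumR (fun _ => 0) (S k)); [|apply sumR_zero]. apply sumR_ext. intros i Hi.
      unfold J, G. rewrite RInt_point. unfold zero; simpl. ring. }
    split.
    { intros k Hk. destruct k as [|k]. apply Hf.
      apply derivable_continuous_pt. eexists. apply (Hdk k Hk 0). }
    split.
    { intros t Ht. destruct (Hode t Ht) as [pr H].
      rewrite (link N a b u u0 t pr Ht Hf) in H.
      simpl X.
      assert (Hft : f t = u t). { unfold f, ut. destruct (Rle_dec 0 t); [auto|lra]. }
      replace (sumR (fun j => a j * (X b f j t - f t)) N) with (- sumR a N * u t + sumR (fun j => a j * I b (ut u u0) j t) N).
      - apply is_derive_Reals. apply (is_derive_ext_loc u f).
        + exists (mkposreal t Ht). intros y Hy. simpl in Hy. change (Rabs (y - t) < t) in Hy.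
          apply Rabs_def2 in Hy. unfold f, ut. destruct (Rle_dec 0 y); [auto|lra].
        + apply is_derive_Reals. exact H.
      - rewrite Hft. rewrite (sumR_ext N (fun j => a j * (X b f j t - u t)) (fun j => a j * I b (ut u u0) j t - a j * u t)).
        + rewrite sumR_minus. rewrite <- (sumR_mulr N a (u t)). ring.
        + intros j Hj. destruct j as [|j]; [lia|]. simpl X. fold f. ring. }
    intros t Ht k Hk. destruct k as [|k]; [lia|].
    replace (S k - 1)%nat with k by lia. apply Hdk; lia. }
  destruct (abstract_conv N a b (X b f) u0 Hy eps Heps) as [T [HT0 HT]].
  exists T. intros t Ht. specialize (HT t Ht).
  simpl X in HT. unfold f, ut in HT. destruct (Rle_dec 0 t); [|lra].
  exact HT.
Qed.
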